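(* For every integer $n\geqslant 2$, $\mathbf{I}\mathbb{N}_{\infty}^n$ is an $E$-unitary inverse semigroup.
   Context: $\mathbb{N}=\{1,2,3,\ldots\}$ and $\mathbb{N}^n$ carries the Euclidean metric $d$. A partial isometry of $\mathbb{N}^n$ is an injective partial map $\alpha\colon\mathbb{N}^n\rightharpoonup\mathbb{N}^n$ with $d((\mathbf{x})\alpha,(\mathbf{y})\alpha)=d(\mathbf{x},\mathbf{y})$ for all $\mathbf{x},\mathbf{y}\in\operatorname{dom}\alpha$; it is cofinite if $\mathbb{N}^n\setminus\operatorname{dom}\alpha$ and $\mathbb{N}^n\setminus\operatorname{ran}\alpha$ are finite. $\mathbf{I}\mathbb{N}_{\infty}^n$ is the monoid of all partial cofinite isometries of $\mathbb{N}^n$ under composition of partial maps. An inverse semigroup $S$ is $E$-unitary if whenever $e$ is an idempotent, $s\in S$ and $e\preccurlyeq s$ (natural partial order: $a\preccurlyeq b$ iff $a=bf$ for some idempotent $f$), then $s$ is an idempotent. *)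

(* Defs.v *)
From HB Require Import structures.
From mathcomp Require Import all_boot all_order all_algebra.
Set Implicit Arguments. Unset Strict Implicit. Unset Printing Implicit Defensive.
Import Order.TTheory GRing.Theory Num.Theory.

(* Points of Z^n-like ambient type: finite functions 'I_n -> nat.
   N^n (N = {1,2,...}) is the subset of those with all coordinates >= 1. *)
Definition pt (n : nat) := {ffun 'I_n -> nat}.

Definition inN (n : nat) (x : pt n) : Prop := forall i : 'I_n, 0 < x i.

(* Squared Euclidean distance (an integer). d(x,y) = sqrt (sqdist x y), so
   d(x',y') = d(x,y) iff sqdist x' y' = sqdist x y. *)
Definition sqdist (n : nat) (x y : pt n) : int :=
  (\sum_(i < n) ((x i)%:Z - (y i)%:Z) ^+ 2)%R.

Definition pmap (n : nat) := pt n -> option (pt n).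

Definition is_pmap_on_N (n : nat) (a : pmap n) : Prop :=
  (forall x, ~ inN x -> a x = None) /\
  (forall x y, a x = Some y -> inN y).

Definition pinjective (n : nat) (a : pmap n) : Prop :=
  forall x y z, a x = Some z -> a y = Some z -> x = y.

Definition pisometry (n : nat) (a : pmap n) : Prop :=
  forall x y x' y', a x = Some x' -> a y = Some y' -> sqdist x' y' = sqdist x y.

Definition cofinite_dom (n : nat) (a : pmap n) : Prop :=
  exists s : seq (pt n), forall x, inN x -> a x = None -> x \in s.

Definition cofinite_ran (n : nat) (a : pmap n) : Prop :=
  exists s : seq (pt n), forall y, inN y -> (forall x, a x <> Some y) -> y \in s.

Definition INinf (n : nat) (a : pmap n) : Prop :=
  [/\ is_pmap_on_N a, pinjective a, pisometry a, cofinite_dom a & cofinite_ran a].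

(* composition of partial maps, maps written on the right: (x)(a b) = ((x)a)b *)
Definition pcomp (n : nat) (a b : pmap n) : pmap n := fun x => obind b (a x).

Definition pid (n : nat) : pmap n :=
  fun x => if [forall i, 0 < x i] then Some x else None.

Definition idempotent_in (n : nat) (e : pmap n) : Prop :=
  INinf e /\ pcomp e e = e.

Definition npo (n : nat) (a b : pmap n) : Prop :=
  exists f, idempotent_in f /\ a = pcomp b f.

Definition is_inverse_monoid (n : nat) : Prop :=
  [/\ INinf (@pid n),
      (forall a b : pmap n, INinf a -> INinf b -> INinf (pcomp a b)),
      (forall a b c : pmap n, pcomp (pcomp a b) c = pcomp a (pcomp b c)),
      (forall a : pmap n, INinf a -> pcomp (@pid n) a = a /\ pcomp a (@pid n) = a)
    & (forall a : pmap n, INinf a ->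
        exists b : pmap n, [/\ INinf b, pcomp (pcomp a b) a = a, pcomp (pcomp b a) b = b &
          forall c : pmap n, INinf c -> pcomp (pcomp a c) a = a -> pcomp (pcomp c a) c = c -> c = b])].

Definition E_unitary (n : nat) : Prop :=
  forall e s : pmap n, idempotent_in e -> INinf s -> npo e s -> idempotent_in s.

(* Main.v *)
Require Import Defs.
From mathcomp Require Import all_boot all_order all_algebra.
From mathcomp Require Import zify ring.
From Stdlib Require Import Classical ClassicalEpsilon FunctionalExtensionality.
Import Defs.
Set Implicit Arguments. Unset Strict Implicit.
Import GRing.Theory.

Section S.
Variable n : nat.

Lemma sq_aux (a b M : int) :
  ((a - M - 1)^+2 - (a-M)^+2 = (b - M - 1)^+2 - (b-M)^+2)%R -> a = b.
Proof.
move=> h.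
have e : (2 * (b - a) = ((a - M - 1)^+2 - (a-M)^+2) - ((b - M - 1)^+2 - (b-M)^+2))%R by ring.
rewrite h subrr in e. lia.
Qed.

Definition bump (p : pt n) (j : 'I_n) : pt n := [ffun i => p i + (i == j)].

Lemma sqdist_bump (x p : pt n) j :
  sqdist x (bump p j) =
  (sqdist x p + (((x j)%:Z - (p j)%:Z - 1)^+2 - ((x j)%:Z - (p j)%:Z)^+2))%R.
Proof.
rewrite /sqdist (bigD1 j) //= [in RHS](bigD1 j) //=.
have -> : (\sum_(i < n | i != j) ((x i)%:Z - (bump p j i)%:Z) ^+ 2 =
           \sum_(i < n | i != j) ((x i)%:Z - (p i)%:Z) ^+ 2)%R.
  apply: eq_bigr => i /negbTE Hi; by rewrite /bump ffunE Hi addn0.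
rewrite /bump ffunE eqxx.
have -> : ((p j + true)%:Z = (p j)%:Z + 1)%R by rewrite PoszD.
set A := (\sum_(i < n | i != j) _)%R. ring.
Qed.

Lemma pid_inN (x : pt n) : inN x -> pid x = Some x.
Proof. by move=> Hx; rewrite /pid (introT forallP Hx). Qed.

Lemma pid_spec (x y : pt n) : pid x = Some y -> y = x /\ inN y.
Proof. rewrite /pid; case: ifP => // /forallP H [<-]; by split. Qed.

Lemma pid_notinN (x : pt n) : ~ inN x -> pid x = None.
Proof.
move=> H; rewrite /pid; case: ifP => // /forallP H'; by exfalso; apply H.
Qed.

Lemma idem_fix (e : Defs.pmap n) : idempotent_in e -> forall x y, e x = Some y -> y = x.
Proof.
case=> [[_ Hinj _ _ _] He] x y Hx.
have := congr1 (fun g => g x) He; rewrite /Defs.pcomp Hx /= => Hy.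
symmetry; exact: (Hinj x y y Hx Hy).
Qed.

Lemma preim (a : Defs.pmap n) : pinjective a -> forall s : seq (pt n),
  exists t : seq (pt n), forall x y, a x = Some y -> y \in s -> x \in t.
Proof.
move=> Hinj; elim=> [|y s [t Ht]]; first by exists [::].
destruct (classic (exists x, a x = Some y)) as [[x0 Hx0]|N].
- exists (x0 :: t) => x y' Ha; rewrite !in_cons; case/orP => [/eqP E|Hin].
  + by subst y'; rewrite (Hinj x x0 y Ha Hx0) eqxx.
  + by rewrite (Ht x y' Ha Hin) orbT.
- exists t => x y' Ha; rewrite in_cons; case/orP => [/eqP E|Hin].
  + by subst y'; exfalso; apply N; exists x.
  + exact: Ht Ha Hin.
Qed.

Lemma bound (s : seq (pt n)) : exists M, forall q, q \in s -> forall i, q i < M.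
Proof.
elim: s => [|q s [M HM]]; first by exists 0.
exists (M + \sum_(i < n) q i).+1 => q'; rewrite in_cons; case/orP => [/eqP -> i|Hin i].
- rewrite ltnS; apply: (leq_trans _ (leq_addl M _)).
  by rewrite (bigD1 i) //= leq_addr.
- have := HM q' Hin i; lia.
Qed.

Lemma pid_IN : INinf (@pid n).
Proof.
split.
- split; first exact: pid_notinN.
  by move=> x y /pid_spec [].
- by move=> x y z /pid_spec [-> _] /pid_spec [-> _].
- by move=> x y x' y' /pid_spec [-> _] /pid_spec [-> _].
- exists [::] => x Hx; by rewrite pid_inN.
- exists [::] => y Hy H; exfalso; apply (H y); exact: pid_inN.
Qed.

Lemma comp_IN (a b : Defs.pmap n) : INinf a -> INinf b -> INinf (pcomp a b).
Proof.
case=> [[Ha1 Ha2] Hai Has [da Hda] [ra Hra]].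
case=> [[Hb1 Hb2] Hbi Hbs [db Hdb] [rb Hrb]].
change (INinf (fun x => obind b (a x))); split.
- split; first by move=> x Hx /=; rewrite Ha1.
  move=> x y; case: (a x) => //= u; exact: Hb2.
- move=> x y z; case Ex: (a x) => [u|] //=; case Ey: (a y) => [v|] //= Hu Hv.
  have E := Hbi _ _ _ Hu Hv; subst v; exact: Hai Ex Ey.
- move=> x y x' y'; case Ex: (a x) => [u|] //=; case Ey: (a y) => [v|] //= Hu Hv.
  by rewrite (Hbs _ _ _ _ Hu Hv) (Has _ _ _ _ Ex Ey).
- have [t Ht] := preim Hai db.
  exists (da ++ t) => x Hx; rewrite mem_cat; case Ex: (a x) => [u|] /= H.
  + by rewrite (Ht x u Ex) ?orbT //; apply: Hdb => //; exact: Ha2 Ex.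
  + by rewrite Hda.
- exists (rb ++ seq.pmap b ra) => y Hy H; rewrite mem_cat.
  destruct (classic (exists z, b z = Some y)) as [[z Hz]|N].
  + have Hzn : inN z.
      destruct (classic (inN z)) as [|Nz]; first done.
      by rewrite Hb1 in Hz.
    have Hzr : z \in ra.
      apply: Hra => // x Hx; apply (H x); by rewrite Hx.
    by rewrite mem_pmap -Hz map_f ?orbT.
  + rewrite Hrb //; move=> x Hx; apply N; by exists x.
Qed.

Definition inv (a : Defs.pmap n) : Defs.pmap n := fun y =>
  match excluded_middle_informative (exists x, a x = Some y) with
  | left H => Some (proj1_sig (constructive_indefinite_description _ H))
  | right _ => None
  end.

Lemma inv_spec (a : Defs.pmap n) : pinjective a -> forall x y, inv a y = Some x <-> a x = Some y.
Proof.
move=> Hinj x y; rewrite /inv; case: excluded_middle_informative => [H|N].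
- case: constructive_indefinite_description => z Hz /=; split; first by case=> <-.
  move=> Hx; congr Some; exact: (Hinj z x y Hz Hx).
- split => // Hx; exfalso; apply N; by exists x.
Qed.

Lemma inv_IN (a : Defs.pmap n) : INinf a -> INinf (inv a).
Proof.
case=> [[Ha1 Ha2] Hai Has [da Hda] [ra Hra]].
have Sp := inv_spec Hai.
split.
- split.
  + move=> y Hy; case E: (inv a y) => [x|] //; exfalso; apply Hy.
    apply: (Ha2 x); exact/Sp.
  + move=> y x /Sp Hx; destruct (classic (inN x)) as [|N]; first done.
    by rewrite Ha1 in Hx.
- move=> x y z /Sp Hx /Sp Hy; rewrite Hx in Hy; by case: Hy.
- move=> x y x' y' /Sp Hx /Sp Hy; by rewrite (Has _ _ _ _ Hx Hy).
- exists ra => y Hy H; apply: Hra => // x Hx.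
  by rewrite (proj2 (Sp x y) Hx) in H.
- exists da => x Hx H; apply: Hda => //; case E: (a x) => [y|] //.
  exfalso; apply (H y); exact/Sp.
Qed.

Lemma monoid : is_inverse_monoid n.
Proof.
split.
- exact: pid_IN.
- exact: comp_IN.
- move=> a b c; apply: functional_extensionality => x; rewrite /Defs.pcomp.
  by case: (a x).
- move=> a; case=> [[Ha1 Ha2] _ _ _ _]; split; apply: functional_extensionality => x; rewrite /Defs.pcomp.
  + rewrite /pid; case: ifP => //= Hf; rewrite Ha1 // => Hx.
    by move: Hf; rewrite (introT forallP Hx).
  + case Hx: (a x) => [y|] //=; rewrite pid_inN //; exact: (Ha2 x y Hx).
- move=> a Ha; have Hai : pinjective a by case: Ha.
  have Sp := inv_spec Hai.
  exists (inv a); split.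
  + exact: inv_IN.
  + apply: functional_extensionality => x; rewrite /Defs.pcomp.
    case Hx: (a x) => [y|] //=; by rewrite (proj2 (Sp x y) Hx) /= Hx.
  + apply: functional_extensionality => y; rewrite /Defs.pcomp.
    case E: (inv a y) => [x|] //=; by rewrite (proj1 (Sp x y) E) /= E.
  + move=> c Hc H1 H2; apply: functional_extensionality => y.
    have Hci : pinjective c by case: Hc.
    have := congr1 (fun g => g y) H2; rewrite /Defs.pcomp.
    case Ec: (c y) => [z|] /=.
    * case Ea: (a z) => [w|] //= Hw.
      have E := Hci _ _ _ Ec Hw; subst w.
      symmetry; exact/Sp.
    * move=> _; case E: (inv a y) => [x|] //.
      have Hx := proj1 (Sp x y) E.
      have := congr1 (fun g => g x) H1; rewrite /Defs.pcomp Hx /= Ec //.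
Qed.

Lemma eunit : 2 <= n -> E_unitary n.
Proof.
move=> hn e s He Hs [f [Hf Hes]].
have i0 : 'I_n by exists 0; lia.
have [[Hs1 Hs2] Hsi Hss _ _] := Hs.
have [[[He1 He2] _ _ [d0 Hd0] _] _] := He.
have [M HM] := bound d0.
have fixp : forall z : pt n, (forall i, M.+1 <= z i) -> s z = Some z.
  move=> z Hz.
  have Hzn : inN z by move=> i; have := Hz i; lia.
  case Ez: (e z) => [y|].
  - have Ey := idem_fix He Ez; subst y.
    move: Ez; rewrite Hes /Defs.pcomp; case Es: (s z) => [w|] //= Hw.
    by rewrite (idem_fix Hf Hw).
  - have := HM z (Hd0 z Hzn Ez) i0; have := Hz i0; move=> h1 h2; by have := ltn_trans h2 h1; rewrite ltnn.
set p : pt n := [ffun _ => M.+1].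
have Hp : s p = Some p by apply: fixp => i; rewrite ffunE.
have Hq : forall j, s (bump p j) = Some (bump p j).
  by move=> j; apply: fixp => i; rewrite ffunE ffunE; lia.
have fixall : forall x x', s x = Some x' -> x' = x.
  move=> x x' Hx; apply/ffunP => j.
  have E1 := Hss _ _ _ _ Hx Hp.
  have E2 := Hss _ _ _ _ Hx (Hq j).
  rewrite !sqdist_bump E1 in E2.
  move/addrI: E2 => E2.
  have := sq_aux E2; by case.
split; first done.
apply: functional_extensionality => x; rewrite /Defs.pcomp.
case Hx: (s x) => [x'|] //=; have E := fixall _ _ Hx; subst x'; by rewrite Hx.
Qed.

End S.

Theorem corollary4 (n : nat) (hn : 2 <= n) :
  is_inverse_monoid n /\ E_unitary n.
Proof. split; [exact: monoid | exact: eunit]. Qed.
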